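(* Let $m\ge2$ be an integer and let $A$ be a left brace with $A^{(3)}=A^{m+1}=\{0\}$. Let $a\in A$, and define $a_1=a$ and $a_{j+1}=a*a_j$ for $j\ge1$. Then \[S=\Bigl\{\sum_{k=1}^m t_ka_k\;\Big|\; t_k\in\mathbb{Z},\ 1\le k\le m\Bigr\}\] is the subbrace of $A$ generated by $a$.
   Context: A left brace $(A,+,\cdot)$ is a set $A$ with two binary operations such that $(A,+)$ is an abelian group, $(A,\cdot)$ is a group, and $a(b+c)=ab-a+ac$ for all $a,b,c\in A$. In a left brace, $a*b=-a+ab-b$. For subsets $L,M\subseteq A$, $L*M$ is the subgroup of $(A,+)$ generated by $\{l*m\mid l\in L,m\in M\}$. Set $A^{(1)}=A$, $A^{(r+1)}=A^{(r)}*A$, and $A^1=A$, $A^{r+1}=A*A^r$ for $r\ge1$. A subbrace is a subset that is a subgroup of both $(A,+)$ and $(A,\cdot)$; the subbrace generated by $a$ is the intersection of all subbraces containing $a$. *)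

(* Defs.v *)
From HB Require Import structures.
From mathcomp Require Import all_boot all_order all_algebra.
Set Implicit Arguments. Unset Strict Implicit. Unset Printing Implicit Defensive.
Import GRing.Theory.
Local Open Scope ring_scope.

Record left_brace (V : zmodType) := LeftBrace {
  bmul : V -> V -> V;
  binv : V -> V;
  bone : V;
  bmulA : forall x y z, bmul x (bmul y z) = bmul (bmul x y) z;
  bmul1x : forall x, bmul bone x = x;
  bmulx1 : forall x, bmul x bone = x;
  bmulVx : forall x, bmul (binv x) x = bone;
  bmulxV : forall x, bmul x (binv x) = bone;
  bdistr : forall a b c, bmul a (b + c) = bmul a b - a + bmul a c
}.

Section Brace.
Variables (V : zmodType) (B : left_brace V).

Definition bstar (a b : V) : V := - a + bmul B a b - b.

Definition add_subgroup (S : V -> Prop) : Prop :=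
  S 0 /\ (forall x y, S x -> S y -> S (x + y)) /\ (forall x, S x -> S (- x)).

Definition mul_subgroup (S : V -> Prop) : Prop :=
  S (bone B) /\ (forall x y, S x -> S y -> S (bmul B x y))
  /\ (forall x, S x -> S (binv B x)).

Definition bstar_set (L M : V -> Prop) : V -> Prop :=
  fun x => forall S : V -> Prop, add_subgroup S ->
    (forall l m, L l -> M m -> S (bstar l m)) -> S x.

Definition full_set : V -> Prop := fun _ => True.

Fixpoint right_series (r : nat) : V -> Prop :=
  match r with
  | 0%N | 1%N => full_set
  | r'.+1 => bstar_set (right_series r') full_set
  end.

Fixpoint left_series (r : nat) : V -> Prop :=
  match r with
  | 0%N | 1%N => full_set
  | r'.+1 => bstar_set full_set (left_series r')
  end.

Definition is_zero_set (S : V -> Prop) : Prop := forall x, S x <-> x = 0.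

Definition subbrace (S : V -> Prop) : Prop := add_subgroup S /\ mul_subgroup S.

Definition subbrace_gen (a : V) : V -> Prop :=
  fun x => forall S, subbrace S -> S a -> S x.

(* a_1 = a, a_{j+1} = a * a_j ; brace_seq a j = a_{j+1} *)
Definition brace_seq (a : V) (j : nat) : V := iter j (bstar a) a.

End Brace.

(* Main.v *)
Require Import Defs.
From mathcomp Require Import all_boot all_order all_algebra.
Import GRing.Theory.
Local Open Scope ring_scope.

Set Implicit Arguments.
Section Helpers.
Variables (V : zmodType) (B : left_brace V).

Local Notation bm := (bmul B).
Local Notation bs := (bstar B).
Definition lam (x y : V) := - x + bm x y.

Lemma bmx0 x : bm x 0 = x.
Proof.
have := bdistr B x 0 0; rewrite addr0 -{1}(add0r (bm x 0)) => /addIr h.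
by apply/subr0_eq; rewrite -h.
Qed.

Lemma bone0 : bone B = 0.
Proof. by rewrite -(bmx0 (bone B)) bmul1x. Qed.

Lemma lamD x y z : lam x (y + z) = lam x y + lam x z.
Proof. by rewrite /lam bdistr; rewrite !addrA [- x + _]addrC. Qed.

Lemma lam0 x : lam x 0 = 0.
Proof. by rewrite /lam bmx0 addNr. Qed.

Lemma additive_N (f : V -> V) : (forall x y, f (x + y) = f x + f y) ->
  forall x, f (- x) = - f x.
Proof.
move=> fD x; have f0 : f 0 = 0.
  by have := fD 0 0; rewrite addr0 -{1}(addr0 (f 0)) => /addrI.
by apply/eqP; rewrite -subr_eq0 opprK -fD addNr f0.
Qed.

Lemma additive_mulrz (f : V -> V) : (forall x y, f (x + y) = f x + f y) ->
  forall x t, f (x *~ t) = f x *~ t.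
Proof.
move=> fD x t.
have hn : forall n : nat, f (x *+ n) = f x *+ n.
  elim=> [|n IH]; first by rewrite !mulr0n; have := fD 0 0; rewrite addr0 -{1}(addr0 (f 0)) => /addrI.
  by rewrite !mulrS fD IH.
case: t => n; first exact: hn.
by rewrite NegzE !mulrNz (additive_N _ fD); congr (- _); exact: hn.
Qed.

Lemma additive_sum (f : V -> V) : (forall x y, f (x + y) = f x + f y) ->
  forall n (F : 'I_n -> V), f (\sum_(k < n) F k) = \sum_(k < n) f (F k).
Proof.
move=> fD n F; apply: (big_rec2 (fun y1 y2 => f y1 = y2)) => [|i y1 y2 _ <-]; last by rewrite fD.
by have := fD 0 0; rewrite addr0 -{1}(addr0 (f 0)) => /addrI.
Qed.

Lemma sub_mulrz (P : V -> Prop) : add_subgroup P -> forall x t, P x -> P (x *~ t).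
Proof.
move=> [P0 [PD PN]] x t Px.
have hn : forall n : nat, P (x *+ n).
  by elim=> [|n IH]; [rewrite mulr0n | rewrite mulrS; apply: (PD)].
case: t => n; first exact: hn.
by rewrite NegzE mulrNz; apply: PN; exact: hn.
Qed.

Lemma sub_sum (P : V -> Prop) : add_subgroup P -> forall n (F : 'I_n -> V),
  (forall k, P (F k)) -> P (\sum_(k < n) F k).
Proof.
move=> [P0 [PD PN]] n F HF; elim/big_rec: _ => // i y _ Py; exact: PD.
Qed.

Lemma lam_comp x y z : lam x (lam y z) = lam (bm x y) z.
Proof.
rewrite [lam y z]/lam lamD (additive_N _ (lamD x)) /lam bmulA.
by rewrite opprD opprK addrACA subrr add0r.
Qed.

Lemma lam1 z : lam 0 z = z.
Proof. by rewrite /lam oppr0 add0r -bone0 bmul1x. Qed.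

Lemma lamVK x y : lam (binv B x) (lam x y) = y.
Proof. by rewrite lam_comp bmulVx bone0 lam1. Qed.
Lemma lamKV x y : lam x (lam (binv B x) y) = y.
Proof. by rewrite lam_comp bmulxV bone0 lam1. Qed.

Lemma bsE x y : bs x y = lam x y - y.
Proof. by []. Qed.

Lemma bsD x y z : bs x (y + z) = bs x y + bs x z.
Proof. by rewrite !bsE lamD opprD addrACA. Qed.

Lemma bsx0 x : bs x 0 = 0.
Proof. by rewrite bsE lam0 subr0. Qed.

Lemma bmE x y : bm x y = x + y + bs x y.
Proof. by rewrite /bstar addrA [x + y + _]addrAC addrK addNKr. Qed.

Definition AA := bstar_set B (@full_set V) (@full_set V).

Lemma AA_sub : add_subgroup AA.
Proof.
split; first by move=> S [S0 _] _.
split; first by move=> x y Hx Hy S HS Hg; case: (HS) => _ [HD _]; apply: (HD); [apply: Hx|apply: Hy].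
by move=> x Hx S HS Hg; case: (HS) => _ [_ HN]; apply: HN; apply: Hx.
Qed.

Lemma AA_bs x y : AA (bs x y).
Proof. by move=> S _ Hg; apply: Hg. Qed.

Hypothesis H3 : is_zero_set (right_series B 3).

Lemma AA_bs0 w z : AA w -> bs w z = 0.
Proof.
move=> Hw; apply/H3 => S HS Hg; exact: Hg.
Qed.

Lemma K1 u v z : AA v -> bs (u + v) z = bs u z.
Proof.
move=> Hv.
set u' := binv B u; set w := v + bs u' v.
have Hw : AA w by case: AA_sub => _ [HD _]; apply: (HD) => //; apply: AA_bs.
have Ew : lam u w = v.
  by rewrite /w lamD bsE lamD lamKV (additive_N _ (lamD u)) addrC subrK.
have Euw : bm u w = u + v by rewrite -Ew /lam addrA subrr add0r.
rewrite -Euw !bsE -lam_comp.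
have -> : lam w z = z + bs w z by rewrite bsE addrC subrK.
by rewrite AA_bs0 // addr0.
Qed.

Lemma K2 x y z : bs (x + y) z = bs x z + bs y z + bs x (bs y z).
Proof.
rewrite -(@K1 (x + y) (bs x y) z (AA_bs x y)) -bmE bsE -lam_comp.
have -> : lam y z = z + bs y z by rewrite bsE addrC subrK.
rewrite lamD.
have -> : lam x z = z + bs x z by rewrite bsE addrC subrK.
have -> : lam x (bs y z) = bs y z + bs x (bs y z) by rewrite [bs x (bs y z)]bsE addrC subrK.
by rewrite addrAC [z + _ - z]addrAC subrr add0r addrA.
Qed.

End Helpers.
Unset Implicit Arguments.

Theorem theoremD (V : zmodType) (B : left_brace V) (m : nat) (hm : (2 <= m)%N)
  (H3 : is_zero_set (right_series B 3))
  (Hm : is_zero_set (left_series B m.+1))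
  (a : V) :
  forall x : V,
    (exists t : 'I_m -> int, x = \sum_(k < m) (brace_seq B a k) *~ t k)
    <-> subbrace_gen B a x.
Proof.
set a_ := brace_seq B a.
set S := fun y : V => exists t : 'I_m -> int, y = \sum_(k < m) a_ k *~ t k.
set L := left_series B.
have S_sub : add_subgroup S.
  split; first by exists (fun _ => 0); rewrite big1 // => k _; rewrite mulr0z.
  split.
    move=> x y [t ->] [t' ->]; exists (fun k => t k + t' k).
    by rewrite -big_split /=; apply: eq_bigr => k _; rewrite mulrzDr.
  move=> x [t ->]; exists (fun k => - t k).
  by rewrite -sumrN; apply: eq_bigr => k _; rewrite mulrNz.
have S_gen : forall k, (k < m)%N -> S (a_ k).
  move=> k hk; exists (fun j : 'I_m => ((nat_of_ord j == k) : nat)%:Z).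
  rewrite (bigD1 (Ordinal hk)) //= eqxx mulr1z big1 ?addr0 // => j hj.
  have /negbTE -> : nat_of_ord j != k.
    by apply: contra hj => /eqP hjk; apply/eqP; apply: val_inj.
  by rewrite mulr0z.
have S_min : forall P : V -> Prop, add_subgroup P ->
    (forall k, (k < m)%N -> P (a_ k)) -> forall y, S y -> P y.
  move=> P hP hk y [t ->]; apply: sub_sum => // k.
  by apply: sub_mulrz => //; apply: hk.
have S_add : forall f : V -> V, (forall x y, f (x + y) = f x + f y) ->
    (forall k, (k < m)%N -> S (f (a_ k))) -> forall y, S y -> S (f y).
  move=> f fD hk y [t ->]; rewrite additive_sum //; apply: sub_sum => // k.
  by rewrite additive_mulrz //; apply: sub_mulrz => //; apply: hk.
have a_L : forall k, L k.+1 (a_ k).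
  elim=> [|k IH] //; move=> P _ Hg; exact: Hg.
have bs_L : forall n x y, L n y -> L n.+1 (bstar B x y).
  by case=> [|n] x y Hy // P _ Hg; apply: Hg.
have am0 : a_ m = 0 by apply/Hm; apply: a_L.
have S_a : forall k, (k <= m)%N -> S (a_ k).
  move=> k; rewrite leq_eqVlt => /orP [/eqP -> | hk]; last exact: S_gen.
  by rewrite am0; case: S_sub.
have S_bsa : forall y, S y -> S (bstar B a y).
  apply: S_add; first exact: bsD.
  by move=> k hk; apply: (S_a k.+1).
have S_bs0 : forall y, bstar B 0 y = 0.
  by move=> y; rewrite bsE lam1 subrr.
have K3 : forall d, (d <= m.+1)%N -> forall y, L (m.+1 - d)%N y -> S y ->
    forall t, S (bstar B (a *~ t) y).
  elim=> [|d IH] hd y.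
    rewrite subn0 => /Hm -> _ t; rewrite bsx0; by case: S_sub.
  move=> Hy Sy.
  have Hy' : L (m.+1 - d)%N (bstar B a y).
    have -> : (m.+1 - d = (m.+1 - d.+1).+1)%N by rewrite subnS prednK // subn_gt0.
    exact: bs_L.
  have IH' := IH (ltnW hd) _ Hy' (S_bsa _ Sy).
  case: S_sub => S0 [SD SN].
  elim/int_rec.
  - by rewrite mulr0z S_bs0.
  - move=> n Hn; rewrite -addn1 PoszD mulrzDr mulr1z (K2 H3).
    by apply: (SD); [apply: (SD)|]; [exact: Hn|exact: S_bsa|exact: IH'].
  - move=> n Hn.
    have := K2 H3 (a *~ - (n.+1)%:Z) a y.
    have -> : a *~ - (n.+1)%:Z + a = a *~ - n%:Z.
      by rewrite -addn1 PoszD opprD mulrzDr mulrN1z subrK.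
    move=> E; have -> : bstar B (a *~ - (n.+1)%:Z) y =
        bstar B (a *~ - n%:Z) y - bstar B a y - bstar B (a *~ - (n.+1)%:Z) (bstar B a y).
      rewrite E; set X := bstar B _ y; set b := bstar B a y; set W := bstar B _ b.
      by rewrite (addrAC X b W) !addrK.
    apply: (SD); [apply: (SD)|apply: (SN)]; [exact: Hn|apply: (SN); exact: S_bsa|exact: IH'].
have decomp : forall x, S x -> exists t0 v, AA B v /\ x = a *~ t0 + v.
  move=> x [t ->]; have hm0 : (0 < m)%N by apply: leq_trans hm.
  rewrite (bigD1 (Ordinal hm0)) //=.
  eexists; eexists; split; last reflexivity.
  case: (AA_sub B) => A0 [AD _].
  apply: (big_ind (AA B) A0 AD) => k hk.
  apply: (sub_mulrz (AA_sub B)).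
  case: k hk => [[|k'] hk'] //= _.
  exact: AA_bs.
have S_bs : forall x y, S x -> S y -> S (bstar B x y).
  move=> x y Sx; apply: S_add; first exact: bsD.
  move=> k hk; have [t0 [v [Hv ->]]] := decomp x Sx.
  rewrite (K1 H3) //; apply: (K3 m.+1) => //; last exact: S_gen.
  by rewrite subnn.
have S_mul : forall x y, S x -> S y -> S (bmul B x y).
  move=> x y Sx Sy; rewrite bmE; case: S_sub => _ [SD _].
  by apply: (SD); [apply: (SD)|apply: S_bs].
have K4 : forall x, S x -> forall d, (d <= m.+1)%N -> forall y, L (m.+1 - d)%N y -> S y ->
    S (lam B (binv B x) y).
  move=> x Sx; elim=> [|d IH] hd y.
    by rewrite subn0 => /Hm -> _; rewrite lam0; case: S_sub.
  move=> Hy Sy.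
  have Hy' : L (m.+1 - d)%N (bstar B x y).
    have -> : (m.+1 - d = (m.+1 - d.+1).+1)%N by rewrite subnS prednK // subn_gt0.
    exact: bs_L.
  have IH' := IH (ltnW hd) _ Hy' (S_bs _ _ Sx Sy).
  have -> : lam B (binv B x) y = y - lam B (binv B x) (bstar B x y).
    have {1}-> : y = lam B x y - bstar B x y by rewrite bsE opprB addrC subrK.
    by rewrite lamD (@additive_N V _ (@lamD V B _)) lamVK.
  by case: S_sub => _ [SD SN]; apply: (SD) => //; apply: (SN).
have S_brace : subbrace B S.
  split => //; split; first by rewrite bone0; case: S_sub.
  split; first exact: S_mul.
  move=> x Sx.
  have -> : binv B x = - lam B (binv B x) x.
    by rewrite /lam bmulVx bone0 addr0 opprK.
  by case: S_sub => _ [_ SN]; apply: (SN); apply: (K4 x Sx m.+1) => //; rewrite subnn.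
move=> x; split.
  move=> Sx T [[T0 [TD TN]] HT] Ta.
  have Tk : forall k, T (a_ k).
    elim=> [|k IH] //=.
    rewrite /bstar; apply: (TD); [apply: (TD)|apply: (TN)] => //; first exact: (TN).
    by case: HT => _ [HM _]; apply: (HM).
  by apply: (S_min T) => //; split.
move=> Hx; apply: (Hx S) => //; exact: (S_gen 0%N (leq_trans (isT : (0 < 2)%N) hm)).
Qed.
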